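(* Let $\Gamma=(V,E)$ be a reflexive, locally finite, $k$-separable graph with $k\ge2$. Let $A,F$ be $k$-fragments of $\Gamma$ such that $|A|\le|F^{\curlywedge}|$ and $|A\cap F|\ge k-1$. Then $$|A\cap\partial(F)|\le|\partial(A)\cap F^{\curlywedge}|,\qquad |\Gamma(A)\cap\Gamma(F)|\le|A\cap F|+\kappa_k(\Gamma),$$ and $$|F^{\curlywedge}\setminus A^{\curlywedge}|\le|A\setminus F|+\kappa_k(\Gamma)-\kappa_{k-1}(\Gamma).$$
   Context: A graph is a pair $\Gamma=(V,E)$ with $E\subseteq V\times V$; reflexive means $(x,x)\in E$ for all $x$; locally finite means each $\Gamma(x)=\{y:(x,y)\in E\}$ is finite. For $A\subseteq V$: $\Gamma(A)=\bigcup_{x\in A}\Gamma(x)$, $\partial(A)=\Gamma(A)\setminus A$, $A^{\curlywedge}=V\setminus(A\cup\Gamma(A))$. $\Gamma$ is $j$-separable if some finite $X$ has $|X|\ge j$ and $|V\setminus\Gamma(X)|\ge j$; then $\kappa_j(\Gamma)=\min\{|\partial(X)|: X\text{ finite},|X|\ge j,|V\setminus\Gamma(X)|\ge j\}$, and a $j$-fragment is a finite $X$ with $|X|\ge j$, $|V\setminus\Gamma(X)|\ge j$ and $|\partial(X)|=\kappa_j(\Gamma)$. (A $k$-separable graph is also $(k-1)$-separable.) *)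

(* Defs.v *)
From Stdlib Require Import List Arith ClassicalEpsilon.
Import ListNotations.

Section Graphs.
Context {V : Type}.

Definition fin (S : V -> Prop) : Prop := exists l : list V, forall x, S x <-> In x l.
Definition is_card (S : V -> Prop) (n : nat) : Prop :=
  exists l : list V, NoDup l /\ length l = n /\ forall x, S x <-> In x l.
(* |S| >= n, meaningful also for infinite S *)
Definition card_ge (S : V -> Prop) (n : nat) : Prop :=
  exists l : list V, NoDup l /\ length l = n /\ forall x, In x l -> S x.
(* cardinality of a finite set (junk value if S is infinite) *)
Definition ncard (S : V -> Prop) : nat := epsilon (inhabits 0) (is_card S).

Definition setI (A B : V -> Prop) : V -> Prop := fun x => A x /\ B x.
Definition setD (A B : V -> Prop) : V -> Prop := fun x => A x /\ ~ B x.

Variable E : V -> V -> Prop.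
Definition reflexive_graph : Prop := forall x, E x x.
Definition locally_finite : Prop := forall x, fin (E x).

Definition nbhd (A : V -> Prop) : V -> Prop := fun y => exists x, A x /\ E x y.
Definition bdry (A : V -> Prop) : V -> Prop := setD (nbhd A) A.
Definition wedge (A : V -> Prop) : V -> Prop := fun y => ~ A y /\ ~ nbhd A y.

Definition sep_cand (j : nat) (X : V -> Prop) : Prop :=
  fin X /\ j <= ncard X /\ card_ge (fun y => ~ nbhd X y) j.
Definition separable (j : nat) : Prop := exists X, sep_cand j X.
Definition kappa (j : nat) : nat :=
  epsilon (inhabits 0) (fun n =>
    (exists X, sep_cand j X /\ ncard (bdry X) = n) /\
    forall X, sep_cand j X -> n <= ncard (bdry X)).
Definition fragment (j : nat) (X : V -> Prop) : Prop :=
  sep_cand j X /\ ncard (bdry X) = kappa j.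
End Graphs.

(* Main.v *)
Require Import Defs.
From Stdlib Require Import List Arith ClassicalEpsilon.
From Stdlib Require Import Classical Lia.
Import ListNotations.
Local Open Scope bool_scope.

Definition dec (P : Prop) : bool := if excluded_middle_informative P then true else false.

Lemma dec_true P : dec P = true <-> P.
Proof. unfold dec; destruct (excluded_middle_informative P); split; intro H;
  try reflexivity; try assumption; try discriminate; contradiction. Qed.

Lemma dec_false P : dec P = false <-> ~ P.
Proof. unfold dec; destruct (excluded_middle_informative P); split; intro H;
  try reflexivity; try assumption; try discriminate; contradiction. Qed.

Fixpoint cnt {V} (p : V -> bool) (l : list V) : nat :=
  match l with [] => 0 | x :: l' => (if p x then 1 else 0) + cnt p l' end.

Lemma cnt_filter {V} (p : V -> bool) l : length (filter p l) = cnt p l.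
Proof. induction l; simpl; auto; destruct (p a); simpl; auto. Qed.

Lemma split_len {V} (p : V -> bool) l : length l = cnt p l + cnt (fun x => negb (p x)) l.
Proof. induction l; simpl; auto; destruct (p a); simpl; lia. Qed.

Lemma is_card_unique {V} (S : V -> Prop) n m : is_card S n -> is_card S m -> n = m.
Proof.
  intros [l1 [N1 [L1 H1]]] [l2 [N2 [L2 H2]]]. subst.
  apply Nat.le_antisymm; apply NoDup_incl_length; auto; intros x Hx;
  [apply H2, H1|apply H1, H2]; auto.
Qed.

Lemma ncard_is {V} (S : V -> Prop) n : is_card S n -> ncard S = n.
Proof.
  intros H. unfold ncard. apply (is_card_unique S); auto.
  apply (epsilon_spec (inhabits 0) (is_card S)). eauto.
Qed.

Lemma ncard_cnt {V} (U : list V) S : NoDup U -> (forall x, S x -> In x U) ->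
  ncard S = cnt (fun x => dec (S x)) U.
Proof.
  intros ND Sub. rewrite <- cnt_filter. apply ncard_is.
  exists (filter (fun x => dec (S x)) U). split; [apply NoDup_filter; auto|split; auto].
  intro x; rewrite filter_In, dec_true; split; [intro; split; auto | tauto].
Qed.

Lemma cnt_ext {V} (p q : V -> bool) l : (forall x, In x l -> p x = q x) -> cnt p l = cnt q l.
Proof.
  induction l as [|a l IH]; simpl; intros H; auto.
  rewrite (H a (or_introl eq_refl)), IH; auto.
Qed.

Lemma cnt_le {V} (p q : V -> bool) l :
  (forall x, In x l -> p x = true -> q x = true) -> cnt p l <= cnt q l.
Proof.
  induction l as [|a l IH]; simpl; intros H; auto.
  specialize (IH (fun x Hx => H x (or_intror Hx))).
  destruct (p a) eqn:Ep; [rewrite (H a (or_introl eq_refl) Ep)|destruct (q a)]; lia.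
Qed.

Lemma ncard_mono {V} (U : list V) (S T : V -> Prop) : NoDup U -> (forall x, T x -> In x U) ->
  (forall x, S x -> T x) -> ncard S <= ncard T.
Proof.
  intros ND HT HST. rewrite (ncard_cnt U S), (ncard_cnt U T); auto.
  apply cnt_le. intros x _ H. apply (proj2 (dec_true _)), HST, (proj1 (dec_true _)); exact H.
Qed.

Lemma length_le_ncard {V} (U : list V) (S : V -> Prop) L : NoDup U -> (forall x, S x -> In x U) ->
  NoDup L -> (forall x, In x L -> S x) -> length L <= ncard S.
Proof.
  intros ND Sub NL HL. rewrite (ncard_cnt U S) by auto. rewrite <- cnt_filter.
  apply NoDup_incl_length; auto. intros x Hx; apply filter_In; split;
  [apply Sub, HL; auto | apply dec_true; auto].
Qed.

Lemma card_ge_list {V} (S : V -> Prop) l : forall m, NoDup l -> m <= length l ->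
  (forall x, In x l -> S x) -> card_ge S m.
Proof.
  induction l as [|a l IH]; intros m ND Hm HS.
  - exists []. simpl in *. split; [constructor|split; [lia|intros x []]].
  - destruct (Nat.eq_dec m (length (a :: l))) as [e|ne].
    + exists (a :: l); auto.
    + apply NoDup_cons_iff in ND. apply IH; simpl in *; try tauto; try lia.
      intros; apply HS; auto.
Qed.

Lemma card_ge_mono {V} (S T : V -> Prop) n m : card_ge S n -> m <= n ->
  (forall x, S x -> T x) -> card_ge T m.
Proof.
  intros [l [ND [Len H]]] Hm HST. apply (card_ge_list T l); auto; lia.
Qed.

Lemma fin_nbhd {V} (E : V -> V -> Prop) A : locally_finite E -> fin A -> fin (nbhd E A).
Proof.
  intros lf [l Hl].
  assert (H : forall l, exists l', forall y, (exists x, In x l /\ E x y) <-> In y l').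
  { induction l0 as [|a l0 IH].
    - exists []. intros y; simpl; split; [intros [x [[] _]] | intros []].
    - destruct IH as [l' H]; destruct (lf a) as [la Ha]. exists (la ++ l').
      intro y; rewrite in_app_iff, <- H, <- Ha. split.
      + intros [x [[<-|Hx] Exy]]; [left; auto | right; eauto].
      + intros [Hy|[x [Hx Exy]]]; [exists a; simpl; auto | exists x; simpl; auto]. }
  destruct (H l) as [l' H']. exists l'. intro y; rewrite <- H'; unfold nbhd; split;
  intros [x [Hx Exy]]; exists x; split; auto; apply Hl; auto.
Qed.

Lemma exists_min (P : nat -> Prop) : (exists n, P n) -> exists n, P n /\ forall m, P m -> n <= m.
Proof.
  intros [n Hn]. revert Hn. induction n as [n IH] using (well_founded_induction lt_wf).
  intros Hn. destruct (classic (exists m, P m /\ m < n)) as [[m [Pm Lm]]|Hno].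
  - apply (IH m Lm Pm).
  - exists n; split; auto; intros m Pm; destruct (le_lt_dec n m); auto; exfalso; eauto.
Qed.

Lemma kappa_min {V} (E : V -> V -> Prop) j X : (exists X, sep_cand E j X) -> sep_cand E j X ->
  kappa E j <= ncard (bdry E X).
Proof.
  intros Hex HX. unfold kappa.
  match goal with |- epsilon ?i ?P <= _ =>
    assert (HP : exists n, P n); [|apply (proj2 (epsilon_spec i P HP)); auto] end.
  destruct (exists_min (fun n => exists X, sep_cand E j X /\ ncard (bdry E X) = n)) as [n [H1 H2]].
  { destruct Hex as [X0 HX0]; eauto. }
  exists n; split; auto; intros X' HX'; apply H2; eauto.
Qed.

Section Exp.
Variables (V : Type) (p1 p2 p3 p4 : V -> bool).
Definition mt b1 b2 b3 b4 x := Bool.eqb (p1 x) b1 && Bool.eqb (p2 x) b2 && Bool.eqb (p3 x) b3 && Bool.eqb (p4 x) b4.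
Definition valid (b1 b2 b3 b4 : bool) := implb b1 b2 && implb b3 b4 && (b2 || b4).
Definition sum2 (h : bool -> nat) := h true + h false.
Definition sum4 (h : bool -> bool -> bool -> bool -> nat) :=
  sum2 (fun b1 => sum2 (fun b2 => sum2 (fun b3 => sum2 (fun b4 => h b1 b2 b3 b4)))).

Lemma expand (g : bool -> bool -> bool -> bool -> bool) U :
  (forall x, In x U -> valid (p1 x) (p2 x) (p3 x) (p4 x) = true) ->
  cnt (fun x => g (p1 x) (p2 x) (p3 x) (p4 x)) U =
  sum4 (fun b1 b2 b3 b4 => if valid b1 b2 b3 b4 && g b1 b2 b3 b4 then cnt (mt b1 b2 b3 b4) U else 0).
Proof.
  induction U as [|a l IH]; intros Hv.
  - cbv [sum4 sum2 valid implb andb orb]; simpl.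
    repeat match goal with |- context [if ?b then 0 else 0] => destruct b end; reflexivity.
  - specialize (IH (fun x Hx => Hv x (or_intror Hx))).
    generalize (Hv a (or_introl eq_refl)). simpl cnt. rewrite IH.
    unfold mt.
    destruct (g (p1 a) (p2 a) (p3 a) (p4 a)) eqn:Eg; revert Eg;
    destruct (p1 a), (p2 a), (p3 a), (p4 a); intros Eg Hva; simpl in Hva; try discriminate;
    cbv [sum4 sum2 valid implb andb orb Bool.eqb]; rewrite ?Eg; simpl; lia.
Qed.
End Exp.

Lemma ncard_expand {V} (U : list V) (S : V -> Prop) p1 p2 p3 p4 g : NoDup U ->
  (forall x, In x U -> valid (p1 x) (p2 x) (p3 x) (p4 x) = true) ->
  (forall x, S x -> In x U) ->
  (forall x, In x U -> (S x <-> g (p1 x) (p2 x) (p3 x) (p4 x) = true)) ->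
  ncard S = sum4 (fun b1 b2 b3 b4 => if valid b1 b2 b3 b4 && g b1 b2 b3 b4
                   then cnt (mt V p1 p2 p3 p4 b1 b2 b3 b4) U else 0).
Proof.
  intros ND Hv Sub Hiff. rewrite (ncard_cnt U S) by auto. rewrite <- expand by auto.
  apply cnt_ext. intros x Hx. destruct (dec (S x)) eqn:D.
  - symmetry; apply Hiff; auto; apply dec_true; auto.
  - apply dec_false in D. destruct (g (p1 x) (p2 x) (p3 x) (p4 x)) eqn:G; auto.
    exfalso; apply D, Hiff; auto.
Qed.

Definition pA {V} (S : V -> Prop) (x : V) := dec (S x).

Ltac iff_tac := intros x Hx; unfold pA, dec;
  repeat match goal with |- context [excluded_middle_informative ?P] =>
    destruct (excluded_middle_informative P) end;
  cbv [setI setD bdry wedge] in *; simpl; split; intro HH; try reflexivity; try discriminate; tauto.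

Ltac sub_tac HU hA hF HnbX E A := let x := fresh "x" in let Hx := fresh "Hx" in
  intros x Hx; apply HU; specialize (hA x); specialize (hF x); specialize (HnbX x);
  cbv [setI setD bdry wedge] in Hx; destruct (classic (nbhd E A x)); tauto.
Ltac iff_tac2 HnbX := let x := fresh "x" in let Hx := fresh "Hx" in
  intros x Hx; specialize (HnbX x); unfold pA, dec;
  repeat match goal with |- context [excluded_middle_informative ?P] =>
    destruct (excluded_middle_informative P) end;
  cbv [setI setD bdry wedge]; simpl; split; intro HH; try reflexivity; try discriminate; tauto.
Ltac EXP EX HU hA hF HnbX E A Q S g := pose proof (EX S g ltac:(sub_tac HU hA hF HnbX E A) ltac:(iff_tac2 HnbX)) as Q;
  cbv [sum4 sum2 valid implb andb orb negb] in Q.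

Theorem mainTheorem16 (V : Type) (E : V -> V -> Prop) (k : nat) :
  2 <= k -> reflexive_graph E -> locally_finite E -> separable E k ->
  forall A F : V -> Prop,
    fragment E k A -> fragment E k F ->
    card_ge (wedge E F) (ncard A) ->
    k - 1 <= ncard (setI A F) ->
    ncard (setI A (bdry E F)) <= ncard (setI (bdry E A) (wedge E F)) /\
    ncard (setI (nbhd E A) (nbhd E F)) <= ncard (setI A F) + kappa E k /\
    ncard (setD (wedge E F) (wedge E A)) + kappa E (k - 1)
      <= ncard (setD A F) + kappa E k.
Proof.
  intros Hk refl lf sep A F [[finA [kA wA]] bA] [[finF [kF wF]] bF] Hw HAF.
  pose (eqd := fun x y : V => excluded_middle_informative (x = y)).
  destruct (fin_nbhd E A lf finA) as [lA HlA].
  destruct (fin_nbhd E F lf finF) as [lF HlF].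
  set (U := nodup eqd (lA ++ lF)).
  assert (ND : NoDup U) by apply NoDup_nodup.
  assert (HU : forall x, In x U <-> nbhd E A x \/ nbhd E F x).
  { intro x; unfold U; rewrite nodup_In, in_app_iff, <- HlA, <- HlF; tauto. }
  assert (hA : forall x, A x -> nbhd E A x) by (intros x Hx; exists x; split; auto; apply refl).
  assert (hF : forall x, F x -> nbhd E F x) by (intros x Hx; exists x; split; auto; apply refl).
  assert (HnbX : forall y, nbhd E (fun x => A x \/ F x) y <-> nbhd E A y \/ nbhd E F y).
  { intro y; unfold nbhd; split.
    - intros [x [[Hx|Hx] Exy]]; [left|right]; eauto.
    - intros [[x [Hx Exy]]|[x [Hx Exy]]]; exists x; auto. }
  assert (Hv : forall x, In x U -> valid (pA A x) (pA (nbhd E A) x) (pA F x) (pA (nbhd E F) x) = true).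
  { intros x Hx; apply HU in Hx; unfold pA, dec;
    destruct (excluded_middle_informative (A x)), (excluded_middle_informative (nbhd E A x)),
      (excluded_middle_informative (F x)), (excluded_middle_informative (nbhd E F x));
    simpl; try reflexivity; exfalso; specialize (hA x); specialize (hF x); tauto. }
  pose proof (fun S g => ncard_expand U S (pA A) (pA (nbhd E A)) (pA F) (pA (nbhd E F)) g ND Hv) as EX.
  EXP EX HU hA hF HnbX E A Q1 A (fun a ga f gf : bool => a).
  EXP EX HU hA hF HnbX E A Q2 (bdry E A) (fun a ga f gf : bool => ga && negb a).
  EXP EX HU hA hF HnbX E A Q3 (bdry E F) (fun a ga f gf : bool => gf && negb f).
  EXP EX HU hA hF HnbX E A Q4 (setI A (bdry E F)) (fun a ga f gf : bool => a && (gf && negb f)).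
  EXP EX HU hA hF HnbX E A Q5 (setI (bdry E A) (wedge E F)) (fun a ga f gf : bool => ga && negb a && (negb f && negb gf)).
  EXP EX HU hA hF HnbX E A Q6 (setI (nbhd E A) (nbhd E F)) (fun a ga f gf : bool => ga && gf).
  EXP EX HU hA hF HnbX E A Q7 (setI A F) (fun a ga f gf : bool => a && f).
  EXP EX HU hA hF HnbX E A Q8 (setD (wedge E F) (wedge E A)) (fun a ga f gf : bool => (negb f && negb gf) && negb (negb a && negb ga)).
  EXP EX HU hA hF HnbX E A Q9 (setD A F) (fun a ga f gf : bool => a && negb f).
  EXP EX HU hA hF HnbX E A Q10 (fun x => nbhd E A x /\ nbhd E F x /\ ~ (A x /\ F x)) (fun a ga f gf : bool => ga && gf && negb (a && f)).
  EXP EX HU hA hF HnbX E A Q11 (setI (nbhd E A) (wedge E F)) (fun a ga f gf : bool => ga && (negb f && negb gf)).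
  EXP EX HU hA hF HnbX E A Q12 (fun x => A x \/ F x) (fun a ga f gf : bool => a || f).
  EXP EX HU hA hF HnbX E A Q13 (bdry E (fun x => A x \/ F x)) (fun a ga f gf : bool => (ga || gf) && negb (a || f)).
  assert (sepY : sep_cand E (k - 1) (setI A F)).
  { split; [|split; auto].
    - destruct finA as [l Hl]. exists (filter (fun x => dec (F x)) l). intro x.
      rewrite filter_In, dec_true, <- Hl; unfold setI; tauto.
    - apply (card_ge_mono _ _ k (k - 1) wA); [lia|].
      intros y H [x [[Ax Fx] Exy]]; apply H; exists x; auto. }
  assert (K1 := kappa_min E (k - 1) (setI A F) (ex_intro _ _ sepY) sepY).
  assert (M1 : ncard (bdry E (setI A F)) <= ncard (fun x => nbhd E A x /\ nbhd E F x /\ ~ (A x /\ F x))).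
  { apply (ncard_mono U); auto.
    - intros x [H1 _]; apply HU; auto.
    - intros x [[z [[Az Fz] Ezx]] Hn]; split; [exists z; auto|split; [exists z; auto|exact Hn]]. }
  assert (G1 : ncard (setI A (bdry E F)) <= ncard (setI (bdry E A) (wedge E F))).
  { destruct (le_lt_dec (ncard (setI A (bdry E F))) (ncard (setI (bdry E A) (wedge E F)))) as [G1|G1];
      [exact G1| exfalso].
    destruct Hw as [L [NDL [LenL HL]]].
    assert (L1 : length (filter (pA (nbhd E A)) L) <= ncard (setI (nbhd E A) (wedge E F))).
    { apply (length_le_ncard U); auto.
      - intros x [H _]; apply HU; left; auto.
      - apply NoDup_filter; auto.
      - intros x Hx; apply filter_In in Hx; destruct Hx as [Hx Hp].
        split; [apply dec_true; exact Hp | apply HL; auto]. }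
    assert (SP := split_len (pA (nbhd E A)) L). rewrite <- !cnt_filter in SP.
    assert (sepX : sep_cand E k (fun x => A x \/ F x)).
    { split; [|split].
      - destruct finA as [l1 H1], finF as [l2 H2]. exists (l1 ++ l2). intro x.
        rewrite in_app_iff, <- H1, <- H2; tauto.
      - lia.
      - apply (card_ge_list _ (filter (fun x => negb (pA (nbhd E A) x)) L)).
        + apply NoDup_filter; auto.
        + lia.
        + intros x Hx; apply filter_In in Hx; destruct Hx as [Hx Hp].
          apply Bool.negb_true_iff, dec_false in Hp. destruct (HL x Hx) as [_ HnF].
          rewrite HnbX; tauto. }
    assert (KX := kappa_min E k _ sep sepX). lia. }
  split; [exact G1|split; lia].
Qed.
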